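(* Let $d\ge2$, $\Omega\subset\mathbb{R}^d$ a convex polytope, $\mathcal{T}_h$ a shape-regular simplicial triangulation of $\Omega$, $\varepsilon>0$, and let $V_h$, $\Pi_h$, $\Pi_h^c$, $b_h$ and $|||\cdot|||$ be as in the context. Then for every $v\in V_h$, $$\tfrac12|||v|||^2\le b_h(v,v).$$
   Context: For a simplex $K$ with vertices $a_1,\dots,a_{d+1}$ and barycentric coordinates $\lambda_i$, $Z_K=\mathbb{P}_2(K)\oplus\operatorname{span}\{\lambda_i^2\lambda_j-\lambda_i\lambda_j^2:i<j\}$ and $e_{ij}=a_j-a_i$. $Z_h=\{v\in H^1(\Omega): v|_K\in Z_K\ \forall K,\ v(a),\nabla v(a)\text{ single-valued at every vertex }a\}$; $V_h=\{v\in Z_h: v(a)=0,\ \nabla v(a)=0\text{ at every vertex }a\in\partial\Omega\}$. For $v\in Z_h$ and $K\in\mathcal{T}_h$, $\Pi_Kv=\sum_i v(a_i)\lambda_i+\sum_i\sum_{j\ne i}(e_{ij}\cdot\nabla v|_K)(a_i)\tfrac12\lambda_i\lambda_j$; $(\Pi_hv)|_K=\Pi_Kv$ and $\Pi_h^c=I-\Pi_h$. $\nabla_h^k$ denotes the elementwise $k$-th derivative. For $v,w\in V_h$: $b_h(v,w)=\varepsilon^2\bigl((\nabla_h^2\Pi_hv,\nabla_h^2\Pi_hw)+(\nabla_h^2\Pi_h^cv,\nabla_h^2\Pi_h^cw)\bigr)+(\nabla v,\nabla w)$ and $|||v|||=\bigl(\varepsilon^2\|\nabla_h^2v\|_{L^2}^2+\|\nabla_hv\|_{L^2}^2\bigr)^{1/2}$.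 *)

(* Defs.v *)
From HB Require Import structures.
From mathcomp Require Import all_boot all_order all_algebra.
From mathcomp Require Import all_classical all_reals all_analysis.
Set Implicit Arguments. Unset Strict Implicit. Unset Printing Implicit Defensive.
Import Order.TTheory GRing.Theory Num.Theory.
Import numFieldNormedType.Exports.
Local Open Scope classical_set_scope.
Local Open Scope ring_scope.

Section FEM.
Variable R : realType.

Definition dotv (d : nat) (u w : 'rV[R]_d) : R := \sum_(k < d) u 0 k * w 0 k.

Definition evec (d : nat) (k : 'I_d) : 'rV[R]_d := delta_mx 0 k.

Definition grad (d : nat) (f : 'rV[R]_d -> R) (x : 'rV[R]_d) : 'rV[R]_d :=
  \row_k derive f x (evec k).
Definition hess (d : nat) (f : 'rV[R]_d -> R) (x : 'rV[R]_d) : 'M[R]_d :=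
  \matrix_(i, j) derive (fun y => derive f y (evec i)) x (evec j).

Definition sqnv (d : nat) (u : 'rV[R]_d) : R := \sum_(k < d) u 0 k ^+ 2.
Definition sqnm (d : nat) (A : 'M[R]_d) : R := \sum_(i < d) \sum_(j < d) A i j ^+ 2.

Definition hull (d m : nat) (p : 'I_m -> 'rV[R]_d) : set 'rV[R]_d :=
  [set x | exists mu : 'I_m -> R, (forall i, 0 <= mu i) /\ \sum_i mu i = 1 /\
                                  x = \sum_i mu i *: p i].

(* A simplex in R^d is given by its d+1 vertices a : 'I_d.+1 -> 'rV_d.
   bary_mx a has rows (a_i, 1); the simplex is nondegenerate iff it is
   invertible; barycentric coordinates lambda(x) solve lambda * M = (x, 1),
   i.e. sum_i lambda_i a_i = x and sum_i lambda_i = 1. *)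
Definition bary_mx (d : nat) (a : 'I_d.+1 -> 'rV[R]_d) : 'M[R]_d.+1 :=
  \matrix_(i, j) (if (j < d)%N as b return (j < d)%N = b -> R
                  then fun h => a i 0 (Ordinal h) else fun _ => 1) erefl.
Definition ext1 (d : nat) (x : 'rV[R]_d) : 'rV[R]_d.+1 :=
  \row_j (if (j < d)%N as b return (j < d)%N = b -> R
          then fun h => x 0 (Ordinal h) else fun _ => 1) erefl.
Definition nondegenerate (d : nat) (a : 'I_d.+1 -> 'rV[R]_d) : Prop :=
  bary_mx a \in unitmx.
Definition lam (d : nat) (a : 'I_d.+1 -> 'rV[R]_d) (i : 'I_d.+1) (x : 'rV[R]_d) : R :=
  (ext1 x *m invmx (bary_mx a)) 0 i.
Definition simplex (d : nat) (a : 'I_d.+1 -> 'rV[R]_d) : set 'rV[R]_d := hull a.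

Definition P2 (d : nat) (q : 'rV[R]_d -> R) : Prop :=
  exists (c : R) (b : 'rV[R]_d) (A : 'M[R]_d),
    forall x, q x = c + dotv b x + (x *m A *m x^T) 0 0.

(* Z_K = P_2(K) + span{lam_i^2 lam_j - lam_i lam_j^2 : i < j}; an element of
   Z_K is represented by its (unique) polynomial extension to R^d. *)
Definition ZK (d : nat) (a : 'I_d.+1 -> 'rV[R]_d) (p : 'rV[R]_d -> R) : Prop :=
  exists q : 'rV[R]_d -> R, P2 q /\
  exists c : 'I_d.+1 -> 'I_d.+1 -> R, forall x,
    p x = q x + \sum_(i < d.+1) \sum_(j < d.+1 | (i < j)%N)
                  c i j * (lam a i x ^+ 2 * lam a j x - lam a i x * lam a j x ^+ 2).

(* Pi_K v, where v is given on K by its representative p, with vertex values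
   v(a_i) and vertex gradients (grad v|_K)(a_i) = grad p (a_i). *)
Definition PiK (d : nat) (a : 'I_d.+1 -> 'rV[R]_d) (p : 'rV[R]_d -> R)
  (x : 'rV[R]_d) : R :=
  \sum_(i < d.+1) p (a i) * lam a i x
  + \sum_(i < d.+1) \sum_(j < d.+1 | j != i)
      dotv (a j - a i) (grad p (a i)) * (2^-1 * lam a i x * lam a j x).
Definition PicK (d : nat) (a : 'I_d.+1 -> 'rV[R]_d) (p : 'rV[R]_d -> R)
  (x : 'rV[R]_d) : R := p x - PiK a p x.

(* Lebesgue integral over R^d of a nonnegative extended-real function, as the
   iterated one-dimensional Lebesgue integral (equal to the d-dimensional
   Lebesgue integral by Tonelli). *)
Fixpoint iterint (n : nat) : ('rV[R]_n -> \bar R) -> \bar R :=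
  match n return ('rV[R]_n -> \bar R) -> \bar R with
  | 0 => fun f => f 0
  | n'.+1 => fun f =>
      (\int[lebesgue_measure]_(t in [set: R])
          iterint (fun y : 'rV[R]_n' => f (row_mx (t%:M : 'rV[R]_1) y)))%E
  end.

Definition intover (d : nat) (S : set 'rV[R]_d) (g : 'rV[R]_d -> R) : \bar R :=
  iterint (fun x => if `[< S x >] then (g x)%:E else 0%E).

Definition triangulation (d n : nat) (Obar : set 'rV[R]_d)
  (a : 'I_n -> 'I_d.+1 -> 'rV[R]_d) : Prop :=
  (forall k, nondegenerate (a k)) /\
  Obar = \bigcup_(k in [set: 'I_n]) simplex (a k) /\
  (forall k l, k != l -> interior (simplex (a k)) `&` interior (simplex (a l)) = set0) /\
  (* conformity: the intersection of two simplices is the convex hull of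
     their common vertices (i.e. empty or a common face) *)
  (forall k l, simplex (a k) `&` simplex (a l) =
     [set x | exists mu : 'I_d.+1 -> R,
        (forall i, 0 <= mu i) /\ \sum_i mu i = 1 /\
        (forall i, mu i != 0 -> exists j, a k i = a l j) /\
        x = \sum_i mu i *: a k i]).

(* Membership in V_h: v is continuous on Obar (H^1 for piecewise polynomials),
   v|_K = p k on K_k with p k in Z_K, vertex gradients single valued,
   values and gradients vanishing at boundary vertices. *)
Definition in_Vh (d n : nat) (Obar : set 'rV[R]_d) (a : 'I_n -> 'I_d.+1 -> 'rV[R]_d)
  (v : 'rV[R]_d -> R) (p : 'I_n -> 'rV[R]_d -> R) : Prop :=
  {within Obar, continuous v} /\
  (forall k, ZK (a k) (p k)) /\
  (forall k x, simplex (a k) x -> v x = p k x) /\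
  (forall k l i j, a k i = a l j -> grad (p k) (a k i) = grad (p l) (a l j)) /\
  (forall k i, ~ interior Obar (a k i) -> v (a k i) = 0 /\ grad (p k) (a k i) = 0).

Definition sq_grad_h (d n : nat) (a : 'I_n -> 'I_d.+1 -> 'rV[R]_d)
  (p : 'I_n -> 'rV[R]_d -> R) : \bar R :=
  (\sum_(k < n) intover (simplex (a k)) (fun x => sqnv (grad (p k) x)))%E.
Definition sq_hess_h (d n : nat) (a : 'I_n -> 'I_d.+1 -> 'rV[R]_d)
  (p : 'I_n -> 'rV[R]_d -> R) : \bar R :=
  (\sum_(k < n) intover (simplex (a k)) (fun x => sqnm (hess (p k) x)))%E.

Definition bh_vv (d n : nat) (eps : R) (a : 'I_n -> 'I_d.+1 -> 'rV[R]_d)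
  (p : 'I_n -> 'rV[R]_d -> R) : \bar R :=
  ((eps ^+ 2)%:E * (sq_hess_h a (fun k => PiK (a k) (p k))
                    + sq_hess_h a (fun k => PicK (a k) (p k)))
   + sq_grad_h a p)%E.
Definition tnorm2 (d n : nat) (eps : R) (a : 'I_n -> 'I_d.+1 -> 'rV[R]_d)
  (p : 'I_n -> 'rV[R]_d -> R) : \bar R :=
  ((eps ^+ 2)%:E * sq_hess_h a p + sq_grad_h a p)%E.

End FEM.

(* Main.v *)
Require Import Defs.
From HB Require Import structures.
From mathcomp Require Import all_boot all_order all_algebra.
From mathcomp Require Import all_classical all_reals all_analysis.
From mathcomp Require Import measurable_realfun.
From mathcomp Require Import ring lra.
Import Order.TTheory GRing.Theory Num.Theory.
Import numFieldNormedType.Exports.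
Local Open Scope classical_set_scope.
Local Open Scope ring_scope.
Set Implicit Arguments. Unset Strict Implicit. Unset Printing Implicit Defensive.
Section Poly.
Variable R : realType.
Variable n : nat.

Inductive polyfun : ('rV[R]_n -> R) -> Prop :=
| PFc c : polyfun (fun _ => c)
| PFx k : polyfun (fun y => y 0 k)
| PFadd f g : polyfun f -> polyfun g -> polyfun (fun y => f y + g y)
| PFmul f g : polyfun f -> polyfun g -> polyfun (fun y => f y * g y).

Lemma pf_ext f g : polyfun f -> (forall x, f x = g x) -> polyfun g.
Proof. by move=> pf fg; have <- : f = g by apply/funext. Qed.

Lemma pf_opp f : polyfun f -> polyfun (fun y => - f y).
Proof. by move=> pf; apply: pf_ext (PFmul (PFc (-1)) pf) _ => x; rewrite mulN1r. Qed.

Lemma pf_sub f g : polyfun f -> polyfun g -> polyfun (fun y => f y - g y).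
Proof. by move=> pf pg; apply: PFadd pf (pf_opp pg). Qed.

Lemma pf_sum (I : eqType) (s : seq I) (P : pred I) (F : I -> 'rV[R]_n -> R) :
  (forall i, P i -> polyfun (F i)) -> polyfun (fun y => \sum_(i <- s | P i) F i y).
Proof.
move=> pF; elim: s => [|i s IH].
  by apply: pf_ext (PFc 0) _ => x; rewrite big_nil.
case Pi: (P i).
  by apply: pf_ext (PFadd (pF i Pi) IH) _ => x; rewrite big_cons Pi.
by apply: pf_ext IH _ => x; rewrite big_cons Pi.
Qed.

Lemma coord_is_derive (k : 'I_n) (x v : 'rV[R]_n) :
  is_derive x v (fun y : 'rV[R]_n => y 0 k) (v 0 k).
Proof.
apply: DeriveDef.
  exact/diff_derivable/differentiable_coord.
apply: cvg_lim => //.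
apply: cvg_near_cst.
near=> h.
have h0 : h != 0 by near: h; exact: nbhs_dnbhs_neq.
rewrite /= !mxE addrK.
by rewrite -[h^-1 *: _]/(h^-1 * (h * v 0 k)) mulrA mulVf ?mul1r.
Unshelve. all: by end_near.
Qed.

Lemma pf_der f0 : polyfun f0 -> forall v,
  (forall x, derivable f0 x v) /\ polyfun (fun x => derive f0 x v).
Proof.
move=> pf0; induction pf0 as [c|k|f g pf IHf0 pg IHg0|f g pf IHf0 pg IHg0] => v;
  try (have [IHf IHf'] := IHf0 v; have [IHg IHg'] := IHg0 v).
- split => [x|]; first exact: (derivable_cst c).
  by apply: pf_ext (PFc 0) _ => x; rewrite (derive_cst c).
- split => [x|]; first by case: (coord_is_derive k x v).
  apply: pf_ext (PFc (v 0 k)) _ => x.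
  by rewrite (@derive_val _ _ _ _ _ _ _ (coord_is_derive k x v)).
- split => [x|].
    exact: (derivableD (IHf x) (IHg x)).
  apply: pf_ext (PFadd (IHf') (IHg')) _ => x.
  by rewrite (deriveD (IHf x) (IHg x)).
- split => [x|].
    exact: (derivableM (IHf x) (IHg x)).
  apply: pf_ext (PFadd (PFmul pf (IHg')) (PFmul pg (IHf'))) _ => x.
  by rewrite (deriveM (IHf x) (IHg x)).
Qed.

End Poly.
Section Iter.
Variable R : realType.
Local Open Scope ereal_scope.

Definition cmeas d (X : measurableType d) n (w : X -> 'rV[R]_n) :=
  forall i, measurable_fun setT (fun x => w x 0%R i).

Definition JMv n d (X : measurableType d) (F : X -> 'rV[R]_n -> \bar R) :=
  forall d' (X' : measurableType d') (u : X' -> X) (w : X' -> 'rV[R]_n),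
    measurable_fun setT u -> cmeas w -> measurable_fun setT (fun z => F (u z) (w z)).
Arguments JMv n {d} X F.

Lemma iterint_ge0 n (f : 'rV[R]_n -> \bar R) : (forall y, 0 <= f y) -> 0 <= iterint f.
Proof.
elim: n f => [|n IH] f f0 /=; first exact: f0.
apply: integral_ge0 => t _; exact: IH.
Qed.

Lemma JMv_shift n d (X : measurableType d) F : JMv n.+1 X F ->
  JMv n (X * measurableTypeR R)%type (fun xt y => F xt.1 (row_mx (xt.2%:M : 'rV[R]_1) y)).
Proof.
move=> JF d' X' u w mu cw.
apply: (JF _ _ (fst \o u) (fun z => row_mx (((u z).2)%:M : 'rV[R]_1) (w z))).
  exact: measurableT_comp.
move=> i /=.
rewrite (_ : (fun x => _) = match @fintype.split 1 n i with inl j => (fun z => (u z).2)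
   | inr j => fun z => w z 0%R j end); last first.
  apply/funext => z; rewrite mxE; case: (@fintype.split 1 n i) => j //.
  by rewrite mxE (ord1 j) eqxx mulr1n.
case: (@fintype.split 1 n i) => j; last exact: cw.
exact: measurableT_comp.
Qed.

Lemma iterint_meas n : forall d (X : measurableType d) F, JMv n X F ->
  (forall x y, 0 <= F x y) -> measurable_fun setT (fun x => iterint (F x)).
Proof.
elim: n => [|n IH] d X F JF F0 /=.
  apply: (JF _ _ id (fun _ => 0%R)) => //.
have := IH _ _ _ (JMv_shift JF) (fun _ _ => F0 _ _).
move=> mG.
apply: (measurable_fun_fubini_tonelli_F (m2 := lebesgue_measure) _ mG).
by move=> xt; apply: iterint_ge0.
Qed.

Lemma iterint_add n : forall d (X : measurableType d) F G, JMv n X F -> JMv n X G ->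
  (forall x y, 0 <= F x y) -> (forall x y, 0 <= G x y) ->
  forall x, iterint (fun y => F x y + G x y) = iterint (F x) + iterint (G x).
Proof.
elim: n => [|n IH] d X F G JF JG F0 G0 x //=.
rewrite -ge0_integralD //.
- apply: eq_integral => t _.
  exact: (IH _ _ _ _ (JMv_shift JF) (JMv_shift JG) (fun _ _ => F0 _ _) (fun _ _ => G0 _ _) (x, t)).
- by move=> t _; apply: iterint_ge0.
- exact: (measurable_fun_pair2 x (iterint_meas (JMv_shift JF) (fun _ _ => F0 _ _))).
- by move=> t _; apply: iterint_ge0.
- exact: (measurable_fun_pair2 x (iterint_meas (JMv_shift JG) (fun _ _ => G0 _ _))).
Qed.

Lemma iterint_le n : forall d (X : measurableType d) F G, JMv n X F -> JMv n X G ->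
  (forall x y, 0 <= F x y) -> (forall x y, F x y <= G x y) ->
  forall x, iterint (F x) <= iterint (G x).
Proof.
elim: n => [|n IH] d X F G JF JG F0 FG x //=.
apply: ge0_le_integral => //.
- by move=> t _; apply: iterint_ge0.
- exact: (measurable_fun_pair2 x (iterint_meas (JMv_shift JF) (fun _ _ => F0 _ _))).
- exact: (measurable_fun_pair2 x (iterint_meas (JMv_shift JG) (fun _ _ => le_trans (F0 _ _) (FG _ _)))).
- move=> t _.
  exact: (IH _ _ _ _ (JMv_shift JF) (JMv_shift JG) (fun _ _ => F0 _ _) (fun _ _ => FG _ _) (x, t)).
Qed.

End Iter.
Arguments JMv {R} n {d} X F.
Section Geo.
Variable R : realType.
Variable d : nat.

Lemma dmatch_lt (j : 'I_d.+1) (f : 'I_d -> R) (h : (j < d)%N) :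
  (if (j < d)%N as b return (j < d)%N = b -> R
   then fun h => f (Ordinal h) else fun _ => 1) erefl = f (Ordinal h).
Proof.
have : forall (b : bool) (e : (j < d)%N = b), (j < d)%N = true ->
  (if b as b' return (j < d)%N = b' -> R then fun h => f (Ordinal h) else fun _ => 1) e = f (Ordinal h).
  case=> e h'; last by rewrite h' in e.
  by congr f; apply: val_inj.
by move=> H; exact: H.
Qed.

Lemma dmatch_ge (j : 'I_d.+1) (f : 'I_d -> R) : ~~ (j < d)%N ->
  (if (j < d)%N as b return (j < d)%N = b -> R
   then fun h => f (Ordinal h) else fun _ => 1) erefl = 1.
Proof.
move=> h.
have : forall (b : bool) (e : (j < d)%N = b), ~~ (j < d)%N ->
  (if b as b' return (j < d)%N = b' -> R then fun h => f (Ordinal h) else fun _ => 1) e = 1.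
  case=> e h' //; by rewrite e in h'.
by move=> H; exact: H.
Qed.

Lemma ext1_lt (x : 'rV[R]_d) (j : 'I_d.+1) (h : (j < d)%N) : ext1 x 0 j = x 0 (Ordinal h).
Proof. by rewrite mxE dmatch_lt. Qed.
Lemma ext1_ge (x : 'rV[R]_d) (j : 'I_d.+1) : ~~ (j < d)%N -> ext1 x 0 j = 1.
Proof. by move=> h; rewrite mxE dmatch_ge. Qed.
Lemma bary_lt (a : 'I_d.+1 -> 'rV[R]_d) i (j : 'I_d.+1) (h : (j < d)%N) : bary_mx a i j = a i 0 (Ordinal h).
Proof. by rewrite mxE dmatch_lt. Qed.
Lemma bary_ge (a : 'I_d.+1 -> 'rV[R]_d) i (j : 'I_d.+1) : ~~ (j < d)%N -> bary_mx a i j = 1.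
Proof. by move=> h; rewrite mxE dmatch_ge. Qed.


Lemma rowmulM (a : 'I_d.+1 -> 'rV[R]_d) (mu : 'I_d.+1 -> R) (x : 'rV[R]_d) :
  \sum_i mu i = 1 -> x = \sum_i mu i *: a i ->
  (\row_i mu i) *m bary_mx a = ext1 x.
Proof.
move=> s1 xE; apply/rowP => j; rewrite [LHS]mxE.
case h: (j < d)%N.
  rewrite (ext1_lt _ h) xE summxE; apply: eq_bigr => i _.
  by rewrite (bary_lt _ _ h) !mxE.
rewrite ext1_ge ?h // -s1; apply: eq_bigr => i _.
by rewrite bary_ge ?h // mxE mulr1.
Qed.

Lemma rowmulM_inv (a : 'I_d.+1 -> 'rV[R]_d) (mu : 'I_d.+1 -> R) (x : 'rV[R]_d) :
  (\row_i mu i) *m bary_mx a = ext1 x ->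
  \sum_i mu i = 1 /\ x = \sum_i mu i *: a i.
Proof.
move=> E; split.
  have := congr1 (fun A : 'rV[R]_d.+1 => A 0 ord_max) E.
  rewrite /= ext1_ge /= ?ltnn // mxE => <-.
  by apply: eq_bigr => i _; rewrite bary_ge /= ?ltnn // mxE mulr1.
apply/rowP => k.
have hk : ((widen_ord (leqnSn d) k : 'I_d.+1) < d)%N by rewrite /= ltn_ord.
have := congr1 (fun A : 'rV[R]_d.+1 => A 0 (widen_ord (leqnSn d) k)) E.
rewrite /= (ext1_lt _ hk) mxE.
have -> : Ordinal hk = k by apply: val_inj.
move=> <-; rewrite summxE; apply: eq_bigr => i _.
rewrite (bary_lt _ _ hk) !mxE.
by have -> : Ordinal hk = k by apply: val_inj.
Qed.

Lemma simplexE (a : 'I_d.+1 -> 'rV[R]_d) : Defs.nondegenerate a ->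
  forall y, simplex a y <-> forall i, 0 <= lam a i y.
Proof.
move=> nd y; split.
  case=> mu [mu0 [s1 yE]] i.
  rewrite /lam -(rowmulM s1 yE) (mulmxK nd) mxE; exact: mu0.
move=> H.
pose mu := fun i => lam a i y.
have E : (\row_i mu i) *m bary_mx a = ext1 y.
  have -> : (\row_i mu i) = ext1 y *m invmx (bary_mx a).
    by apply/rowP => i; rewrite mxE.
  by rewrite (mulmxKV nd).
have [s1 yE] := rowmulM_inv E.
by exists mu; split.
Qed.

End Geo.
Section Main.
Variable R : realType.

Lemma pf_meas n (f : 'rV[R]_n -> R) : polyfun f ->
  forall d (X : measurableType d) (w : X -> 'rV[R]_n), cmeas w ->
  measurable_fun setT (fun z => f (w z)).
Proof.
move=> pf0 d X w cw; induction pf0 as [c|k|f g pf IHf pg IHg|f g pf IHf pg IHg].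
- exact: measurable_cst.
- exact: cw.
- exact: measurable_funD.
- exact: measurable_funM.
Qed.

Lemma pf_der1 n (f : 'rV[R]_n -> R) v : polyfun f -> polyfun (fun x => derive f x v).
Proof. by move=> pf; case: (pf_der pf v). Qed.

Lemma pf_dble n (f : 'rV[R]_n -> R) v x : polyfun f -> derivable f x v.
Proof. by move=> pf; case: (pf_der pf v). Qed.

Lemma pf_hess n (f : 'rV[R]_n -> R) i j : polyfun f -> polyfun (fun x => hess f x i j).
Proof.
move=> pf; apply: pf_ext (pf_der1 (evec R j) (pf_der1 (evec R i) pf)) _ => x.
by rewrite mxE.
Qed.

Lemma pf_sqnm n (f : 'rV[R]_n -> R) : polyfun f -> polyfun (fun x => sqnm (hess f x)).
Proof.
move=> pf; apply: pf_sum => i _; apply: pf_sum => j _.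
exact: PFmul (pf_hess i j pf) (pf_hess i j pf).
Qed.

Lemma hessB n (f g : 'rV[R]_n -> R) x : polyfun f -> polyfun g ->
  hess (fun y => f y - g y) x = hess f x - hess g x.
Proof.
move=> pf pg; apply/matrixP => i j; rewrite !mxE.
have -> : (fun y => derive (fun y0 => f y0 - g y0) y (evec R i)) =
          (fun y => derive f y (evec R i)) - (fun y => derive g y (evec R i)).
  apply/funext => y.
  have -> : (fun y0 => f y0 - g y0) = f - g by apply/funext.
  by rewrite (deriveB (pf_dble (v:=evec R i) (x:=y) pf) (pf_dble (v:=evec R i) (x:=y) pg)).
by rewrite (deriveB (pf_dble (v:=evec R j) (x:=x) (pf_der1 (evec R i) pf)) (pf_dble (v:=evec R j) (x:=x) (pf_der1 (evec R i) pg))).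
Qed.


Lemma pf_ext1 d (j : 'I_d.+1) : polyfun (fun x : 'rV[R]_d => ext1 x 0 j).
Proof.
case h: (j < d)%N.
  by apply: pf_ext (PFx R (Ordinal h)) _ => x; rewrite (ext1_lt _ h).
by apply: pf_ext (@PFc R d 1) _ => x; rewrite ext1_ge ?h.
Qed.

Lemma pf_lam d (a : 'I_d.+1 -> 'rV[R]_d) i : polyfun (lam a i).
Proof.
apply: pf_ext (pf_sum (index_enum 'I_d.+1) (P:=xpredT)
   (fun j _ => PFmul (pf_ext1 j) (PFc _ (invmx (bary_mx a) j i)))) _ => x.
by rewrite /lam mxE.
Qed.

Lemma pf_ZK d (a : 'I_d.+1 -> 'rV[R]_d) p : ZK a p -> polyfun p.
Proof.
case=> q [[c0 [b [A qE]]] [c pE]].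
have Pq : polyfun q.
  apply: pf_ext (PFadd (PFadd (PFc _ c0)
     (pf_sum (index_enum 'I_d) (P:=xpredT) (fun k _ => PFmul (PFc _ (b 0 k)) (PFx R k))))
     (pf_sum (index_enum 'I_d) (P:=xpredT) (fun j _ => PFmul
        (pf_sum (index_enum 'I_d) (P:=xpredT) (fun i _ => PFmul (PFx R i) (PFc _ (A i j)))) (PFx R j)))) _.
  move=> x; rewrite qE /dotv; congr (_ + _ + _).
  by rewrite !mxE; apply: eq_bigr => j _; rewrite !mxE.
apply: pf_ext (PFadd Pq (pf_sum (index_enum 'I_d.+1) (P:=xpredT) (fun i _ =>
   pf_sum (index_enum 'I_d.+1) (P:=fun j => (i < j)%N) (fun j _ =>
    PFmul (PFc _ (c i j)) (pf_sub (PFmul (PFmul (pf_lam a i) (pf_lam a i)) (pf_lam a j))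
                                (PFmul (pf_lam a i) (PFmul (pf_lam a j) (pf_lam a j)))))))) _.
by move=> x; rewrite pE; congr (_ + _); apply: eq_bigr => i _; apply: eq_bigr => j _;
  rewrite !expr2 !mulrA.
Qed.

Lemma pf_PiK d (a : 'I_d.+1 -> 'rV[R]_d) p : polyfun (PiK a p).
Proof.
apply: pf_ext (PFadd
  (pf_sum (index_enum 'I_d.+1) (P:=xpredT) (fun i _ => PFmul (PFc _ (p (a i))) (pf_lam a i)))
  (pf_sum (index_enum 'I_d.+1) (P:=xpredT) (fun i _ =>
   pf_sum (index_enum 'I_d.+1) (P:=fun j => j != i) (fun j _ =>
    PFmul (PFc _ (dotv (a j - a i) (grad p (a i))))
      (PFmul (PFmul (PFc _ 2^-1) (pf_lam a i)) (pf_lam a j)))))) _.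
by move=> x.
Qed.

Lemma meas_bigand dX (X : measurableType dX) (I : Type) (s : seq I) (B : I -> X -> bool) :
  (forall i, measurable_fun setT (B i)) ->
  measurable_fun setT (fun z => \big[andb/true]_(i <- s) B i z).
Proof.
move=> mB; elim: s => [|i s IH].
  by rewrite (_ : (fun _ => _) = cst true); [exact: measurable_cst|apply/funext => z; rewrite big_nil].
rewrite (_ : (fun _ => _) = (fun z => B i z && \big[andb/true]_(j <- s) B j z)).
  exact: measurable_and.
by apply/funext => z; rewrite big_cons.
Qed.

Definition integrand d (a : 'I_d.+1 -> 'rV[R]_d) (g : 'rV[R]_d -> R) (y : 'rV[R]_d) : \bar R :=
  if `[< simplex a y >] then (g y)%:E else 0%E.

Lemma JM_int d (a : 'I_d.+1 -> 'rV[R]_d) (g : 'rV[R]_d -> R) :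
  Defs.nondegenerate a -> polyfun g ->
  forall dX (X : measurableType dX), JMv d X (fun _ y => integrand a g y).
Proof.
move=> nd pg dX X d' X' u w mu cw /=.
rewrite (_ : (fun z => _) = (fun z => if \big[andb/true]_(i < d.+1) (0 <= lam a i (w z))
   then (g (w z))%:E else 0%E)); last first.
  apply/funext => z; rewrite /integrand.
  have -> // : `[< simplex a (w z) >] = \big[andb/true]_(i < d.+1) (0 <= lam a i (w z)).
  rewrite big_andE; apply/asboolP/forallP => [/(simplexE nd) H i|H].
    exact: H.
  by apply/(simplexE nd) => i; have := H i.
apply: measurable_fun_ifT.
- apply: meas_bigand => i.
  apply: measurable_fun_ler; first exact: measurable_cst.
  exact: (pf_meas (pf_lam a i)).
- apply/measurable_EFinP; exact: (pf_meas pg).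
- exact: measurable_cst.
Qed.

End Main.
Section Fin.
Variable R : realType.
Local Open Scope ereal_scope.

Lemma integrand_ge0 d (a : 'I_d.+1 -> 'rV[R]_d) (g : 'rV[R]_d -> R) :
  (forall y, (0 <= g y)%R) -> forall y, 0 <= integrand a g y.
Proof. by move=> g0 y; rewrite /integrand; case: asboolP => // _; rewrite lee_fin. Qed.

Lemma intover_add d (a : 'I_d.+1 -> 'rV[R]_d) (g1 g2 : 'rV[R]_d -> R) :
  Defs.nondegenerate a -> polyfun g1 -> polyfun g2 ->
  (forall y, (0 <= g1 y)%R) -> (forall y, (0 <= g2 y)%R) ->
  intover (simplex a) (fun x => g1 x + g2 x)%R =
  intover (simplex a) g1 + intover (simplex a) g2.
Proof.
move=> nd p1 p2 g10 g20; rewrite /intover.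
have -> : (fun x => if `[< simplex a x >] then ((g1 x + g2 x)%R)%:E else 0) =
          (fun y => integrand a g1 y + integrand a g2 y).
  by apply/funext => y; rewrite /integrand; case: asboolP => _; rewrite ?adde0.
have := (iterint_add (JM_int nd p1 (X := measurableTypeR R)) (JM_int nd p2 (X := measurableTypeR R))
   (fun _ => @integrand_ge0 d a g1 g10) (fun _ => @integrand_ge0 d a g2 g20) (0%R : R)).
by [].
Qed.

Lemma intover_le d (a : 'I_d.+1 -> 'rV[R]_d) (g1 g2 : 'rV[R]_d -> R) :
  Defs.nondegenerate a -> polyfun g1 -> polyfun g2 ->
  (forall y, (0 <= g1 y)%R) -> (forall y, (g1 y <= g2 y)%R) ->
  intover (simplex a) g1 <= intover (simplex a) g2.
Proof.
move=> nd p1 p2 g10 g12; rewrite /intover.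
apply: (iterint_le (JM_int nd p1 (X := measurableTypeR R)) (JM_int nd p2 (X := measurableTypeR R))
   (fun _ => @integrand_ge0 d a g1 g10) _ (0%R : R)).
move=> _ y; rewrite /integrand; case: asboolP => // _; rewrite lee_fin; exact: g12.
Qed.

Lemma intover_ge0 d (S : set 'rV[R]_d) (g : 'rV[R]_d -> R) :
  (forall y, (0 <= g y)%R) -> 0 <= intover S g.
Proof.
move=> g0; apply: iterint_ge0 => y; case: asboolP => // _; rewrite lee_fin; exact: g0.
Qed.

Lemma sqnm_ge0 n (A : 'M[R]_n) : (0 <= sqnm A)%R.
Proof. by apply: sumr_ge0 => i _; apply: sumr_ge0 => j _; exact: sqr_ge0. Qed.

Lemma sqnv_ge0 n (u : 'rV[R]_n) : (0 <= sqnv u)%R.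
Proof. by apply: sumr_ge0 => i _; exact: sqr_ge0. Qed.

Lemma sqnm_split n (A B : 'M[R]_n) :
  (sqnm A <= (sqnm B + sqnm B) + (sqnm (A - B) + sqnm (A - B)))%R.
Proof.
rewrite /sqnm -!big_split /=; apply: ler_sum => i _.
rewrite -!big_split /=; apply: ler_sum => j _.
rewrite !mxE.
set x := A i j; set y := B i j.
have -> : (y ^+ 2 + y ^+ 2 + ((x - y) ^+ 2 + (x - y) ^+ 2) = x ^+ 2 + (x - 2 * y) ^+ 2)%R.
  by rewrite !sqrrB !expr2; rewrite -!mulr2n; rewrite !mulr_natl; ring.
by rewrite lerDl sqr_ge0.
Qed.

End Fin.
Local Open Scope ereal_scope.

Lemma perk (R : realType) d (a : 'I_d.+1 -> 'rV[R]_d) (p : 'rV[R]_d -> R) :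
  Defs.nondegenerate a -> ZK a p ->
  intover (simplex a) (fun x => sqnm (hess p x)) <=
  (intover (simplex a) (fun x => sqnm (hess (PiK a p) x)) +
   intover (simplex a) (fun x => sqnm (hess (PiK a p) x))) +
  (intover (simplex a) (fun x => sqnm (hess (PicK a p) x)) +
   intover (simplex a) (fun x => sqnm (hess (PicK a p) x))).
Proof.
move=> nd hz.
have pp := pf_ZK hz.
have pPi : polyfun (PiK a p) := pf_PiK a p.
have pPic : polyfun (PicK a p) := pf_sub pp pPi.
have hPic x : hess (PicK a p) x = (hess p x - hess (PiK a p) x)%R := hessB x pp pPi.
have s1 := pf_sqnm pPi.
have s2 := pf_sqnm pPic.
have g1 : forall y, (0 <= sqnm (hess (PiK a p) y))%R by move=> y; exact: sqnm_ge0.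
have g2 : forall y, (0 <= sqnm (hess (PicK a p) y))%R by move=> y; exact: sqnm_ge0.
have E1 := intover_add nd s1 s1 g1 g1.
have E2 := intover_add nd s2 s2 g2 g2.
have E3 := intover_add nd (PFadd s1 s1) (PFadd s2 s2)
  (fun y => addr_ge0 (g1 y) (g1 y)) (fun y => addr_ge0 (g2 y) (g2 y)).
have E := etrans E3 (f_equal2 (fun u v => u + v) E1 E2).
have hle : forall y, (sqnm (hess p y) <= (sqnm (hess (PiK a p) y) + sqnm (hess (PiK a p) y))
    + (sqnm (hess (PicK a p) y) + sqnm (hess (PicK a p) y)))%R.
  by move=> y; rewrite hPic; exact: sqnm_split.
have L := intover_le nd (pf_sqnm pp) (PFadd (PFadd s1 s1) (PFadd s2 s2))
   (fun y => sqnm_ge0 (hess p y)) hle.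
exact: (le_trans L (eq_ind _ (fun z => _ <= z) (lexx _) _ E)).
Qed.

Lemma final_ineq (R : realType) (e : R) (H H1 H2 G : \bar R) :
  0 <= H1 -> 0 <= H2 -> 0 <= G -> 0 <= H -> (0 <= e)%R ->
  H <= (H1 + H1) + (H2 + H2) ->
  (2^-1)%:E * (e%:E * H + G) <= e%:E * (H1 + H2) + G.
Proof.
move=> h1 h2 g h e0 HH.
rewrite ge0_muleDr ?mule_ge0 ?lee_fin //.
apply: leeD.
  rewrite muleCA; apply: lee_wpmul2l; first by rewrite lee_fin.
  rewrite lee_pdivrMl //.
  apply: (le_trans HH).
  rewrite addeACA.
  have -> : ((2 : R)%:E) = 1%:E + 1%:E by rewrite -EFinD; congr EFin; ring.
  by rewrite ge0_muleDl // mul1e.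
apply: gee_pMl => //; rewrite lee_fin.
by rewrite invf_le1 // ler1n.
Qed.

Lemma eq_le_sum4 (R : realType) n (F G : 'I_n -> \bar R) :
  \sum_(k < n) ((F k + F k) + (G k + G k)) <= (\sum_(k < n) F k + \sum_(k < n) F k) + (\sum_(k < n) G k + \sum_(k < n) G k).
Proof. by rewrite !big_split. Qed.

Local Close Scope ereal_scope.
Unset Implicit Arguments. Set Strict Implicit.
Theorem mainTheorem4 (R : realType) (d : nat) (hd : (2 <= d)%N)
  (m : nat) (vert : 'I_m -> 'rV[R]_d)
  (Obar_int : exists x, interior (hull vert) x)
  (n : nat) (a : 'I_n -> 'I_d.+1 -> 'rV[R]_d)
  (hT : triangulation (hull vert) a)
  (eps : R) (heps : 0 < eps)
  (v : 'rV[R]_d -> R) (p : 'I_n -> 'rV[R]_d -> R)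
  (hv : in_Vh (hull vert) a v p) :
  ((2^-1)%:E * tnorm2 eps a p <= bh_vv eps a p)%E.
Proof.
have nd : forall k, Defs.nondegenerate (a k) by case: hT.
case: hv => _ [hZK _].
rewrite /bh_vv /tnorm2.
have HH : (sq_hess_h a p <= (sq_hess_h a (fun k => PiK (a k) (p k)) + sq_hess_h a (fun k => PiK (a k) (p k)))
   + (sq_hess_h a (fun k => PicK (a k) (p k)) + sq_hess_h a (fun k => PicK (a k) (p k))))%E.
  rewrite /sq_hess_h.
  have L := @lee_sum R 'I_n _ _ (index_enum 'I_n) xpredT (fun k _ => perk (nd k) (hZK k)).
  apply: (le_trans L).
  exact: (eq_le_sum4 (fun k => intover (simplex (a k)) (fun x => sqnm (hess (PiK (a k) (p k)) x)))
                    (fun k => intover (simplex (a k)) (fun x => sqnm (hess (PicK (a k) (p k)) x)))).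
apply: final_ineq => //.
- by apply: sume_ge0 => k _; apply: intover_ge0 => y; exact: sqnm_ge0.
- by apply: sume_ge0 => k _; apply: intover_ge0 => y; exact: sqnm_ge0.
- by apply: sume_ge0 => k _; apply: intover_ge0 => y; exact: sqnv_ge0.
- by apply: sume_ge0 => k _; apply: intover_ge0 => y; exact: sqnm_ge0.
- by rewrite exprn_ge0 // ltW.
Qed.
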